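(* Let $(X,T)$ and $(Y,S)$ be minimal topological dynamical systems with $T$ a homeomorphism, and let $\pi: X\to Y$ be a factor map. If $\pi$ is proximal and not almost one-to-one, then $(X,T)$ is strongly $\mathcal{F}_{ip}$-sensitive.
   Context: A topological dynamical system: compact metric space $(X,d)$ with continuous surjection $T$; minimal means every orbit is dense. A factor map $\pi$ is a continuous surjection with $\pi\circ T=S\circ\pi$. A pair $(x,y)$ is proximal if $\inf_n d(T^nx,T^ny)=0$; $\pi$ is proximal if all pairs in the same fiber are proximal; $\pi$ is almost one-to-one if $\{x:\pi^{-1}(\pi(x))=\{x\}\}$ is dense. $\mathcal{F}_{ip}$ is the family of subsets of $\mathbb{Z}_+$ containing some $FS((p_i)_{i=1}^\infty)=\{\sum_{i\in\alpha}p_i:\alpha\subset\mathbb{N}$ finite nonempty$\}$, $p_i\in\mathbb{N}$. $(X,T)$ is strongly $\mathcal{F}_{ip}$-sensitive if there is $\delta>0$ such that for each nonempty open $U$ there are $x,y\in U$ with $\{n\in\mathbb{Z}_+:d(T^nx,T^ny)>\delta\}\in\mathcal{F}_{ip}$. *)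

(* Defs.v *)
From HB Require Import structures.
From mathcomp Require Import all_boot all_order all_algebra.
From mathcomp Require Import all_classical all_reals all_analysis.
Set Implicit Arguments. Unset Strict Implicit. Unset Printing Implicit Defensive.
Import Order.TTheory GRing.Theory Num.Theory.
Local Open Scope classical_set_scope.
Local Open Scope ring_scope.

Section Dyn.
Variable R : realType.

Definition TDS (X : metricType R) (T : X -> X) : Prop :=
  compact [set: X] /\ continuous T /\ (forall y : X, exists x, T x = y).

Definition homeomorphism (X : metricType R) (T : X -> X) : Prop :=
  exists g : X -> X, [/\ cancel T g, cancel g T, continuous T & continuous g].

Definition orbit (X : metricType R) (T : X -> X) (x : X) : set X :=
  [set iter n T x | n in [set: nat]].

Definition minimal (X : metricType R) (T : X -> X) : Prop :=
  forall x : X, closure (orbit T x) = [set: X].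

Definition factor_map (X Y : metricType R) (T : X -> X) (S : Y -> Y)
  (pi : X -> Y) : Prop :=
  [/\ continuous pi, (forall y : Y, exists x, pi x = y) & forall x, pi (T x) = S (pi x)].

(* (x,y) proximal: inf_n d(T^n x, T^n y) = 0 (distances are >= 0) *)
Definition proximal_pair (X : metricType R) (T : X -> X) (x y : X) : Prop :=
  forall e : R, 0 < e -> exists n : nat, mdist (iter n T x) (iter n T y) < e.

Definition proximal_map (X Y : metricType R) (T : X -> X) (pi : X -> Y) : Prop :=
  forall x1 x2 : X, pi x1 = pi x2 -> proximal_pair T x1 x2.

Definition almost_one_to_one (X Y : metricType R) (pi : X -> Y) : Prop :=
  dense [set x : X | pi @^-1` [set pi x] = [set x]].

End Dyn.

Definition FS (p : nat -> nat) : set nat :=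
  [set n | exists2 a : seq nat, uniq a && (a != [::]) & n = \sum_(i <- a) p i]%N.

Definition F_ip : set (set nat) :=
  [set A | exists p : nat -> nat, (forall i, 0 < p i)%N /\ FS p `<=` A].

Definition strongly_Fip_sensitive (R : realType) (X : metricType R) (T : X -> X) : Prop :=
  exists2 delta : R, 0 < delta &
    forall U : set X, open U -> U !=set0 ->
      exists x y, [/\ U x, U y &
        F_ip [set n | delta < mdist (iter n T x) (iter n T y)]].

(* Main.v *)
Require Import Defs.
From HB Require Import structures.
From mathcomp Require Import all_boot all_order all_algebra.
From mathcomp Require Import all_classical all_reals all_analysis.
From mathcomp Require Import lra.
Set Implicit Arguments. Unset Strict Implicit. Unset Printing Implicit Defensive.
Import Order.TTheory GRing.Theory Num.Theory.
Local Open Scope classical_set_scope.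
Local Open Scope ring_scope.


Lemma seq_max (s : seq nat) : s != [::] ->
  exists2 m, m \in s & forall i, i \in s -> (i <= m)%N.
Proof.
elim: s => [//|a s IH] _.
case: (eqVneq s [::]) => [->|sn].
  by exists a; rewrite ?inE // => i; rewrite inE => /eqP ->.
have [m ms Hm] := IH sn.
case: (leqP a m) => am.
  exists m; first by rewrite inE ms orbT.
  by move=> i; rewrite inE => /orP [/eqP ->|/Hm].
exists a; first by rewrite inE eqxx.
move=> i; rewrite inE => /orP [/eqP ->//|/Hm im].
exact: leq_trans im (ltnW am).
Qed.

Section IP.
Variables (P0 Pz : nat -> Prop).
Hypothesis P00 : P0 0.
Hypothesis Hstep : forall F : seq nat, (forall t, t \in F -> P0 t) ->
  exists2 p, (0 < p)%N & forall t, t \in F -> P0 (t + p) /\ Pz (t + p).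

Lemma IP_build : exists p : nat -> nat, (forall i, (0 < p i)%N) /\ FS p `<=` Pz.
Proof.
have H : forall F : seq nat, exists p : nat, (forall t, t \in F -> P0 t) ->
   (0 < p)%N /\ forall t, t \in F -> P0 (t + p) /\ Pz (t + p).
  move=> F; case: (pselect (forall t, t \in F -> P0 t)) => [h|h].
    by have [p p0 Hp] := Hstep h; exists p.
  by exists 0%N => /h.
have [c Hc] := choice H.
pose fix Fs k := if k is k'.+1 then Fs k' ++ map (addn^~ (c (Fs k'))) (Fs k')
                 else [:: 0%N].
pose p k := c (Fs k).
have FP0 : forall k t, t \in Fs k -> P0 t.
  elim=> [|k IH] t /=; first by rewrite inE => /eqP ->.
  rewrite mem_cat => /orP [/IH //|/mapP [t' t'F ->]].
  by have [_ /(_ t' t'F) []] := Hc _ IH.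
have Fmem : forall k s, uniq s -> all (fun i => i < k)%N s ->
    (\sum_(i <- s) p i)%N \in Fs k.
  elim=> [|k IH] s us.
    by case: s us => [|a s] //= _ _; rewrite big_nil inE.
  case: (boolP (k \in s)) => ks alls /=; rewrite mem_cat; apply/orP.
    right; rewrite (perm_big _ (perm_to_rem ks)) big_cons /=.
    apply/mapP; exists (\sum_(j <- rem k s) p j)%N; last by rewrite addnC.
    apply: IH; first exact: rem_uniq.
    apply/allP => i; rewrite mem_rem_uniq // inE => /andP [ik iS].
    by have := allP alls i iS; rewrite ltnS leq_eqVlt (negPf ik).
  left; apply: IH => //; apply/allP => i iS.
  have := allP alls i iS; rewrite ltnS leq_eqVlt => /orP [/eqP ik|//].
  by move: ks; rewrite -ik iS.
exists p; split.
  by move=> i; have [] := Hc (Fs i) (FP0 i).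
move=> n [s /andP [us sn] ->].
have [m ms Hm] := seq_max sn.
rewrite (perm_big _ (perm_to_rem ms)) big_cons /= addnC.
have := Hc (Fs m) (FP0 m) => [[_ /(_ (\sum_(j <- rem m s) p j)%N) []]] //.
apply: Fmem; first exact: rem_uniq.
apply/allP => i; rewrite mem_rem_uniq // inE => /andP [im iS].
by rewrite ltn_neqAle im Hm.
Qed.
End IP.

Local Open Scope ring_scope.
Lemma lt_min_pos (R : realType) (a b : R) : 0 < a -> 0 < b -> 0 < Num.min a b.
Proof. by move=> a0 b0; rewrite lt_min a0 b0. Qed.

Section Basic.
Variables (R : realType) (X : metricType R).
Local Notation d := (@mdist R X).

Lemma dsym (x y : X) : d x y = d y x. Proof. exact: metric_sym. Qed.
Lemma dtri (x y z : X) : d x z <= d x y + d y z. Proof. exact: metric_triangle. Qed.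
Lemma dge0 (x y : X) : 0 <= d x y. Proof. exact: mdist_ge0. Qed.

Lemma nbhs_metric (x : X) (P : set X) : nbhs x P ->
  exists2 r, 0 < r & forall y, d x y < r -> P y.
Proof.
move=> /nbhs_ballP [r r0 H]; exists r => // y xy; apply: H.
by rewrite ballEmdist.
Qed.

Lemma cont_metric (f : X -> X) x : {for x, continuous f} ->
  forall e, 0 < e -> exists2 r, 0 < r & forall y, d x y < r -> d (f x) (f y) < e.
Proof.
move=> cf e e0.
have H1 : \forall y \near x, ball (f x) e (f y) by apply: cvg_ball.
have [r r0 H] := nbhs_metric H1.
exists r => // y /H.
by rewrite ballEmdist.
Qed.

Lemma open_metric (U : set X) x : open U -> U x ->
  exists2 r, 0 < r & forall y, d x y < r -> U y.
Proof.
move=> oU Ux; apply: nbhs_metric.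
exact: open_nbhs_nbhs.
Qed.

Lemma seq_cluster (u : nat -> X) : compact [set: X] ->
  exists x, forall e, 0 < e -> forall N, exists2 n, (N <= n)%N & d x (u n) < e.
Proof.
move=> cX.
have := cX (u @ \oo) _ filterT.
case=> // x [_ cl]; exists x => e e0 N.
have := cl [set y | exists2 n, (N <= n)%N & y = u n] (ball x e).
case.
- by exists N => // n /= Nn; exists n.
- exact: nbhsx_ballx.
move=> y [[n Nn ->]]; rewrite ballEmdist /= => h; by exists n.
Qed.


Lemma natinv_le (N n : nat) : (N <= n)%N -> n.+1%:R^-1 <= N.+1%:R^-1 :> R.
Proof. by move=> Nn; rewrite lef_pV2 ?posrE ?ltr0n // ler_nat. Qed.

Lemma natinv_gt0 (n : nat) : 0 < n.+1%:R^-1 :> R.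
Proof. by rewrite invr_gt0 ltr0n. Qed.

Lemma exists_natinv (e : R) : 0 < e -> exists k : nat, k.+1%:R^-1 < e.
Proof. by move=> /ltr_add_invr [k]; rewrite add0r => h; exists k. Qed.

Lemma iter_cont (f : X -> X) n : continuous f -> continuous (iter n f).
Proof.
move=> cf; elim: n => [|n IH] x /=; first exact: cvg_id.
exact: (continuous_comp (IH x) (cf _)).
Qed.

Lemma unif_cont (f : X -> X) : compact [set: X] -> continuous f ->
  forall e, 0 < e -> exists2 r, 0 < r & forall x y, d x y < r -> d (f x) (f y) < e.
Proof.
move=> cX cf e e0; apply: contrapT => nH.
have H : forall n : nat, exists xy : X * X,
    d xy.1 xy.2 < n.+1%:R^-1 /\ e <= d (f xy.1) (f xy.2).
  move=> n; apply: contrapT => nex; apply: nH; exists n.+1%:R^-1.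
    exact: natinv_gt0.
  move=> x y xy; rewrite ltNge; apply/negP => ex; apply: nex.
  by exists (x, y).
have [u Hu] := choice H.
have [x cx] := seq_cluster (fun n => (u n).1) cX.
have e20 : 0 < e / 2 by rewrite divr_gt0.
have [r r0 Hr] := cont_metric (cf x) e20.
have r20 : 0 < r / 2 by rewrite divr_gt0.
have [N HN] := exists_natinv r20.
have [n Nn xn] := cx _ r20 N.
have [h1 h2] := Hu n.
have xn2 : d x (u n).2 < r.
  rewrite (le_lt_trans (dtri _ (u n).1 _))// (splitr r) ltrD//.
  by rewrite (lt_le_trans h1)// (le_trans (natinv_le Nn))// ltW.
have xn1 : d x (u n).1 < r.
  by rewrite (lt_trans xn)// ltr_pdivrMr// ltr_pMr// ltr1n.
have := Hr _ xn2; have := Hr _ xn1 => a1 a2.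
move: h2; rewrite leNgt => /negP; apply.
rewrite (le_lt_trans (dtri _ (f x) _))// (splitr e) ltrD// dsym//.
Qed.

Lemma unif_cont_iter (f : X -> X) : compact [set: X] -> continuous f ->
  forall K e, 0 < e -> exists2 r, 0 < r & forall i x y, (i <= K)%N ->
    d x y < r -> d (iter i f x) (iter i f y) < e.
Proof.
move=> cX cf; elim=> [|K IH] e e0.
  by exists e => // i x y; rewrite leqn0 => /eqP -> /=.
have [r1 r10 H1] := IH e e0.
have [r2 r20 H2] := unif_cont cX (iter_cont (n:=K.+1) cf) e0.
exists (Num.min r1 r2); first by rewrite lt_min r10 r20.
move=> i x y; rewrite leq_eqVlt ltnS => /orP [/eqP ->|iK];
  rewrite lt_min => /andP [a1 a2]; first exact: H2.
exact: H1.
Qed.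

Lemma minimal_hit (T : X -> X) : minimal T ->
  forall x z e, 0 < e -> exists n, d z (iter n T x) < e.
Proof.
move=> mT x z e e0.
have : closure (Defs.orbit T x) z by rewrite mT.
move=> /(_ (ball z e) (nbhsx_ballx _ _ e0)) [y [[n _ <-]]].
by rewrite ballEmdist /= => h; exists n.
Qed.

Lemma minimal_synd (T : X -> X) : compact [set: X] -> continuous T -> minimal T ->
  forall z e, 0 < e -> exists N, forall x, exists2 n, (n <= N)%N & d z (iter n T x) < e.
Proof.
move=> cX cT mT z e e0; apply: contrapT => nH.
have H : forall N, exists x, forall n, (n <= N)%N -> e <= d z (iter n T x).
  move=> N; apply: contrapT => nex; apply: nH; exists N => x.
  apply: contrapT => nx; apply: nex; exists x => n nN.
  by rewrite leNgt; apply/negP => h; apply: nx; exists n.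
have [u Hu] := choice H.
have [x cx] := seq_cluster u cX.
have e20 : 0 < e / 2 by rewrite divr_gt0.
have [n0 Hn0] := minimal_hit mT x z e20.
have [r r0 Hr] := cont_metric (iter_cont (n:=n0) cT (x:=x)) e20.
have [n Nn xn] := cx _ r0 n0.
have := Hu n n0 Nn; rewrite leNgt => /negP; apply.
rewrite (le_lt_trans (dtri _ (iter n0 T x) _))// (splitr e) ltrD//.
exact: Hr.
Qed.


Lemma sep_nbhd (T : X -> X) (cT : continuous T) (F : seq nat) (x y : X) (del : R) :
  (forall t, t \in F -> del < d (iter t T x) (iter t T y)) ->
  exists2 eta, 0 < eta & forall t, t \in F -> forall u v,
    d x u < eta -> d y v < eta -> del < d (iter t T u) (iter t T v).
Proof.
elim: F => [|t F IH] H.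
  by exists 1 => // t; rewrite in_nil.
have [e1 e10 H1] := IH (fun s sF => H s (@mem_behead _ (t :: F) s sF)).
have Ht := H t (mem_head _ _).
set m := d (iter t T x) (iter t T y) - del.
have m0 : 0 < m / 2 by rewrite divr_gt0 // subr_gt0.
have [r1 r10 Hr1] := cont_metric (iter_cont (n:=t) cT (x:=x)) m0.
have [r2 r20 Hr2] := cont_metric (iter_cont (n:=t) cT (x:=y)) m0.
exists (Num.min e1 (Num.min r1 r2)).
  by rewrite !lt_min e10 r10 r20.
move=> s; rewrite inE => /orP [/eqP ->|sF] u v; rewrite !lt_min.
  move=> /and3P [_ xu1 _] /and3P [_ _ yv2].
  have h1 := Hr1 _ xu1; have h2 := Hr2 _ yv2.
  have tri : d (iter t T x) (iter t T y) <=
      d (iter t T x) (iter t T u) + d (iter t T u) (iter t T v) + d (iter t T v) (iter t T y).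
    rewrite (le_trans (dtri _ (iter t T u) _))// -addrA lerD2l.
    exact: dtri.
  rewrite dsym in h2.
  have : d (iter t T x) (iter t T y) < m / 2 + d (iter t T u) (iter t T v) + m / 2.
    rewrite (le_lt_trans tri)// -!addrA; apply: ltrD h1 _; by rewrite ltrD2l.
  rewrite /m; lra.
move=> /and3P [xu _ _] /and3P [yv _ _].
exact: H1.
Qed.

Section Dyn.
Variables (T : X -> X) (cX : compact [set: X]) (cT : continuous T) (mT : minimal T).

Lemma prox_ret (a x2 : X) : proximal_pair T a x2 ->
  forall eta, 0 < eta -> exists2 p, (0 < p)%N &
    d x2 (iter p T x2) < eta /\ d x2 (iter p T a) < eta.
Proof.
move=> pax eta eta0.
have eta20 : 0 < eta / 2 by rewrite divr_gt0.
have [N HN] := minimal_synd cX cT mT x2 eta20.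
have [g g0 Hg] := unif_cont_iter cX cT N.+1 eta20.
have [n Hn] := pax g g0.
have [i iN Hi] := HN (iter n.+1 T x2).
have E : forall y, iter (i.+1 + n) T y = iter i.+1 T (iter n T y).
  by move=> y; rewrite iterD.
have E2 : iter i T (iter n.+1 T x2) = iter (i.+1 + n) T x2.
  by rewrite -iterD addSnnS.
exists (i.+1 + n)%N => //.
have h1 : d x2 (iter (i.+1 + n) T x2) < eta / 2.
  by rewrite -E2.
split; first by rewrite (lt_trans h1)// ltr_pdivrMr// ltr_pMr// ltr1n.
rewrite (le_lt_trans (dtri _ (iter (i.+1 + n) T x2) _))// (splitr eta) ltrD//.
rewrite !E; apply: Hg; first by rewrite ltnS.
by rewrite dsym.
Qed.

Lemma prox_ret3 (a x2 : X) j : proximal_pair T a x2 ->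
  forall eta, 0 < eta -> exists2 p, (0 < p)%N &
    [/\ d x2 (iter p T x2) < eta, d x2 (iter p T a) < eta &
        d (iter j T x2) (iter p T (iter j T x2)) < eta].
Proof.
move=> pax eta eta0.
have [r r0 Hr] := cont_metric (iter_cont (n:=j) cT (x:=x2)) eta0.
have [p p0 [h1 h2]] := prox_ret pax (lt_min_pos eta0 r0).
exists p => //; split.
- by move: h1; rewrite lt_min => /andP [].
- by move: h2; rewrite lt_min => /andP [].
rewrite -!iterD addnC iterD; apply: Hr.
by move: h1; rewrite lt_min => /andP [].
Qed.

Lemma IP_pair (a x2 : X) j (del : R) : proximal_pair T a x2 ->
  del < d x2 (iter j T x2) ->
  exists p : nat -> nat, (forall i, (0 < p i)%N) /\
    FS p `<=` [set n | del < d (iter n T a) (iter n T (iter j T x2))].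
Proof.
move=> pax dx.
set b := iter j T x2.
apply: (@IP_build (fun n => del < d (iter n T x2) (iter n T b))) => //.
move=> F HF.
have [eta eta0 He] := sep_nbhd cT HF.
have [p p0 [h1 h2 h3]] := prox_ret3 j pax eta0.
exists p => // t tF; split; rewrite /= !iterD; apply: (He t tF) => //.
Qed.
End Dyn.


Lemma ballxx' (x : X) (e : R) : 0 < e -> d x x < e.
Proof. by rewrite mdistxx. Qed.

Lemma baire_lite (A : nat -> set X) (c0 : X) (r0 : R) : compact [set: X] -> 0 < r0 ->
  (forall x, d c0 x < r0 -> exists n, A n x) ->
  exists n c r, 0 < r /\ forall c' r', 0 < r' -> (forall y, d c' y < r' -> d c y < r) ->
    exists y, d c' y < r' /\ A n y.
Proof.
move=> cX r00 cover; apply: contrapT => nH.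
have H : forall (n : nat) (cr : X * R), exists cr' : X * R, 0 < cr.2 ->
    [/\ 0 < cr'.2, (forall y, d cr'.1 y < cr'.2 -> d cr.1 y < cr.2) &
        forall y, d cr'.1 y < cr'.2 -> ~ A n y].
  move=> n [c r] /=.
  case: (pselect (0 < r)) => rp; last by exists (c, r).
  apply: contrapT => nex; apply: nH; exists n, c, r; split => // c' r' r'0 sub.
  apply: contrapT => nY; apply: nex; exists (c', r') => _ /=; split => // y cy Ay.
  by apply: nY; exists y.
have [nxt Hn] := choice (fun nc : nat * (X * R) => H nc.1 nc.2).
pose fix B k := if k is k'.+1 then ((nxt (k', B k')).1, (nxt (k', B k')).2 / 2)
                else (c0, r0).
have Bpos : forall k, 0 < (B k).2.
  elim=> [|k IH] //=; have [h _ _] := Hn (k, B k) IH.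
  by rewrite divr_gt0.
have Bsub : forall k y, d (B k.+1).1 y < 2 * (B k.+1).2 ->
    (d (B k).1 y < (B k).2) /\ ~ A k y.
  move=> k y /=; rewrite mulrC divfK ?pnatr_eq0 // => hy.
  have [_ h1 h2] := Hn (k, B k) (Bpos k).
  by split; [apply: h1 | apply: h2].
have Bnest : forall k m, (k <= m)%N -> forall y, d (B m).1 y < (B m).2 ->
    d (B k).1 y < (B k).2.
  move=> k m; elim: m => [|m IH]; first by rewrite leqn0 => /eqP ->.
  rewrite leq_eqVlt => /orP [/eqP -> //|]; rewrite ltnS => km y hy.
  apply: IH => //; apply: (proj1 (Bsub m y _)).
  rewrite (lt_le_trans hy)// ler_peMl ?ler1n //.
  exact: ltW.
have [z cz] := seq_cluster (fun k => (B k).1) cX.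
have zin : forall k, d (B k.+1).1 z < 2 * (B k.+1).2.
  move=> k; have [m km hm] := cz _ (Bpos k.+1) k.+1.
  have h := Bnest _ _ km (B m).1 (ballxx' (B m).1 (Bpos m)).
  have t := dtri (B k.+1).1 (B m).1 z; rewrite dsym in hm; lra.
have [n An] := cover z (proj1 (Bsub 0%N z (zin 0%N))).
exact: (proj2 (Bsub n z (zin n))).
Qed.

End Basic.

Lemma iter_cancel (A : Type) (f g : A -> A) : cancel f g ->
  forall n x, iter n g (iter n f x) = x.
Proof.
move=> fg; elim=> [|n IH] x //.
by rewrite iterSr /= fg IH.
Qed.

Lemma factor_iter (A B : Type) (T : A -> A) (S : B -> B) (pi : A -> B) :
  (forall x, pi (T x) = S (pi x)) -> forall n x, pi (iter n T x) = iter n S (pi x).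
Proof. by move=> H; elim=> [|n IH] x //=; rewrite H IH. Qed.

Theorem proposition4p7 (R : realType) (X Y : metricType R)
  (T : X -> X) (S : Y -> Y) (pi : X -> Y) :
  TDS T -> TDS S -> homeomorphism T -> minimal T -> minimal S ->
  factor_map T S pi -> proximal_map T pi -> ~ almost_one_to_one pi ->
  strongly_Fip_sensitive T.
Proof.
move=> [cX [cT _]] _ [g [Tg gT _ cg]] mT _ [_ _ piT] prox na1.
(* an open set without singleton fibers *)
have [Op [[c0 /= [oO Oc0]] OS]] := denseNE na1.
have [r0 r00 Hr0] := open_metric oO Oc0.
pose A n x := exists x', pi x' = pi x /\ n.+1%:R^-1 <= mdist x x'.
have cover : forall x, mdist c0 x < r0 -> exists n, A n x.
  move=> x /Hr0 Ox.
  have : ~ (pi @^-1` [set pi x] = [set x]).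
    move=> E; have h : (Op `&` [set x : X | pi @^-1` [set pi x] = [set x]]) x by split.
    by rewrite OS in h.
  move=> nE.
  have [x' [px' nx']] : exists x', pi x' = pi x /\ x' <> x.
    apply: contrapT => nex; apply: nE; apply/seteqP; split => y /=.
      by move=> py; apply: contrapT => ny; apply: nex; exists y.
    by move=> ->.
  have : 0 < mdist x x' by rewrite mdist_gt0; apply/eqP => e; apply: nx'.
  move=> /exists_natinv [n hn]; exists n, x'; split => //; exact: ltW.
have [n [c [r [r_pos HV]]]] := baire_lite cX r00 cover.
have [N HN] := minimal_synd cX cT mT c r_pos.
have [gam gam0 Hg] := unif_cont_iter cX cg N (natinv_gt0 R n).
exists (gam / 4); first by rewrite divr_gt0.
move=> U oU [u0 Uu0].
have [rho rho0 Hrho] := open_metric oU Uu0.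
set rho1 := Num.min rho (gam / 4).
have rho10 : 0 < rho1 by rewrite lt_min rho0 divr_gt0.
have r1a : rho1 <= rho by rewrite /rho1 ge_min lexx.
have r1b : rho1 <= gam / 4 by rewrite /rho1 ge_min lexx orbT.
have [m mN Hm] := HN (iter N g u0).
set e := iter m T (iter N g u0).
set i := (N - m)%N.
have Tie : iter i T e = u0 by rewrite /e -iterD subnK // (iter_cancel gT).
have [eta eta0 Heta] := cont_metric (iter_cont (n:=i) cT (x:=e)) rho10.
have rr : 0 < r - mdist c e by rewrite subr_gt0.
have hsub : forall y, mdist e y < Num.min eta (r - mdist c e) -> mdist c y < r.
  move=> y; rewrite lt_min => /andP [_ h]; have := dtri c e y; lra.
have [a' [ha' [x' [px' hx']]]] := HV e (Num.min eta (r - mdist c e)) (lt_min_pos eta0 rr) hsub.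
set a := iter i T a'.
set x2 := iter i T x'.
have da : mdist u0 a < rho1.
  by rewrite -Tie; apply: Heta; move: ha'; rewrite lt_min => /andP [].
have pa : pi a = pi x2 by rewrite /a /x2 !(factor_iter piT) px'.
have dax : gam <= mdist a x2.
  rewrite leNgt; apply/negP => h.
  have := Hg i a x2 (leq_subr m N) h.
  rewrite /a /x2 !(iter_cancel Tg) => h2.
  by move: hx'; rewrite leNgt h2.
have pax : proximal_pair T a x2 := prox a x2 pa.
have [j hj] := minimal_hit mT x2 u0 rho10.
have hdel : gam / 4 < mdist x2 (iter j T x2).
  have t1 := dtri a u0 x2.
  have t2 := dtri u0 (iter j T x2) x2.
  rewrite [mdist a u0]dsym [mdist (iter j T x2) x2]dsym in t1 t2.
  lra.
have [p [pp Hp]] := IP_pair cX cT mT pax hdel.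
exists a, (iter j T x2); split.
- by apply: Hrho; rewrite (lt_le_trans da).
- by apply: Hrho; rewrite (lt_le_trans hj).
- by exists p.
Qed.
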